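(* Let $A$ be an $n\times n$ right stochastic matrix with Dobrushin coefficient $\sigma(A)>0$, and let $\{A_k\}_{k\in\mathbb{N}}$ be a sequence of $n\times n$ right stochastic matrices. Let $\mu^*$ be the unique probability vector with $\mu^*=\mu^*A$. For every $\epsilon\in(0,1)$, if \[ \sup_{k\in\mathbb{N}}\|A_k-A\|_\infty\le\frac{\sigma(A)\,\epsilon}{2n}, \] then for every probability (row) vector $\mu_0$ of dimension $n$, \[ \limsup_{k\to\infty}\|\mu_0A_0A_1\cdots A_k-\mu^*\|_1\le\epsilon . \]
   Context: The Dobrushin coefficient of an $n\times n$ right stochastic matrix $A$ is $\sigma(A)=\min_{i,k\in\{1,\dots,n\}}\sum_{j=1}^n\min\{A(i,j),A(k,j)\}\in[0,1]$. $\|M\|_\infty$ denotes the maximum absolute entry (or the induced max-row-sum norm) of a matrix; probability vectors are row vectors and $\|\cdot\|_1$ is the $\ell^1$ norm. *)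

(* Defs.v *)
From HB Require Import structures.
From mathcomp Require Import all_boot all_order all_algebra.
Set Implicit Arguments. Unset Strict Implicit. Unset Printing Implicit Defensive.
Import Order.TTheory GRing.Theory Num.Theory.
Local Open Scope ring_scope.

Definition stochastic (R : numDomainType) (n : nat) (A : 'M[R]_n) : Prop :=
  (forall i j, 0 <= A i j) /\ (forall i, \sum_(j < n) A i j = 1).

Definition prob_vec (R : numDomainType) (n : nat) (v : 'rV[R]_n) : Prop :=
  (forall j, 0 <= v 0 j) /\ \sum_(j < n) v 0 j = 1.

Definition norm1 (R : numDomainType) (n : nat) (v : 'rV[R]_n) : R :=
  \sum_(j < n) `|v 0 j|.

(* Dobrushin coefficient sigma(A) = min_{i,k} sum_j min(A i j, A k j).
   (The neutral element 1 of the iterated min is harmless: for stochastic A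
   every inner sum is <= 1.) *)
Definition dobrushin (R : realDomainType) (n : nat) (A : 'M[R]_n) : R :=
  \big[Num.min/1]_(i < n) \big[Num.min/1]_(k < n)
     \sum_(j < n) Num.min (A i j) (A k j).

Fixpoint traj (R : ringType) (n : nat) (mu0 : 'rV[R]_n) (As : nat -> 'M[R]_n)
    (k : nat) : 'rV[R]_n :=
  match k with
  | 0 => mu0 *m As 0%N
  | k'.+1 => traj mu0 As k' *m As k
  end.

(* Main.v *)
Require Import Defs.
From HB Require Import structures.
From mathcomp Require Import all_boot all_order all_algebra.
From mathcomp Require Import ring lra.
Import Order.TTheory GRing.Theory Num.Theory.
Local Open Scope ring_scope.


Lemma dob_le (R : realFieldType) n (A : 'M[R]_n) i k :
  dobrushin A <= \sum_(j < n) Num.min (A i j) (A k j).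
Proof.
rewrite /dobrushin.
apply: le_trans (bigmin_le _ i _) _.
exact: bigmin_le.
Qed.

Lemma dob_le1 (R : realFieldType) n (A : 'M[R]_n) : dobrushin A <= 1.
Proof. exact: bigmin_le_id. Qed.

Lemma absmin (R : realFieldType) (a b : R) : `|a - b| = a + b - 2 * Num.min a b.
Proof.
case: (leP a b) => h.
  rewrite (ler0_norm (_ : a - b <= 0)); [lra| lra].
rewrite (ger0_norm (_ : 0 <= a - b)); [lra|lra].
Qed.

Lemma prob_mul (R : realFieldType) n (mu : 'rV[R]_n) (P : 'M[R]_n) :
  prob_vec mu -> stochastic P -> prob_vec (mu *m P).
Proof.
move=> [m0 m1] [p0 p1]; split.
  move=> j; rewrite mxE; apply: sumr_ge0 => i _; exact: mulr_ge0.
under eq_bigr do rewrite mxE.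
rewrite exchange_big /=.
rewrite -m1; apply: eq_bigr => i _.
by rewrite -mulr_sumr p1 mulr1.
Qed.

Lemma norm1_add (R : realFieldType) n (u w : 'rV[R]_n) :
  norm1 (u + w) <= norm1 u + norm1 w.
Proof.
rewrite /norm1 -big_split /=; apply: ler_sum => j _; rewrite mxE; exact: ler_normD.
Qed.

Lemma norm1_diff (R : realFieldType) n (u w : 'rV[R]_n) :
  prob_vec u -> prob_vec w -> norm1 (u - w) <= 2.
Proof.
move=> [u0 u1] [w0 w1].
rewrite /norm1 (_ : 2 = \sum_(j < n) (u 0 j + w 0 j)); last first.
  by rewrite big_split /= u1 w1.
apply: ler_sum => j _; rewrite !mxE.
apply: le_trans (ler_normB _ _) _.
by rewrite !ger0_norm.
Qed.

Lemma perturb (R : realFieldType) n (mu : 'rV[R]_n) (D : 'M[R]_n) c :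
  prob_vec mu -> (forall i j, `|D i j| <= c) -> norm1 (mu *m D) <= n%:R * c.
Proof.
move=> [m0 m1] hD.
rewrite /norm1 (_ : n%:R * c = \sum_(j < n) c); last first.
  by rewrite sumr_const card_ord mulr_natl.
apply: ler_sum => j _; rewrite mxE.
apply: le_trans (ler_norm_sum _ _ _) _.
apply: le_trans (_ : \sum_i mu 0 i * c <= c).
  apply: ler_sum => i _; rewrite normrM ger0_norm //.
  exact: ler_wpM2l.
by rewrite -mulr_suml m1 mul1r.
Qed.

Lemma contract (R : realFieldType) n (A : 'M[R]_n) (v : 'rV[R]_n) :
  stochastic A -> \sum_(j < n) v 0 j = 0 ->
  norm1 (v *m A) <= (1 - dobrushin A) * norm1 v.
Proof.
move=> [a0 a1] v0.
pose p i := Num.max (v 0 i) 0.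
pose q i := Num.max (- v 0 i) 0.
have p0 i : 0 <= p i by rewrite /p le_max lexx orbT.
have q0 i : 0 <= q i by rewrite /q le_max lexx orbT.
have vpq i : v 0 i = p i - q i.
  rewrite /p /q /=; case: (leP (v 0 i) 0) => h; case: (leP (- v 0 i) 0) => h'; lra.
have avpq i : `|v 0 i| = p i + q i.
  rewrite /p /q /=; case: (leP (v 0 i) 0) => h; case: (leP (- v 0 i) 0) => h'.
  - rewrite (ler0_norm h); lra.
  - rewrite (ler0_norm h); lra.
  - rewrite (gtr0_norm h); lra.
  - rewrite (gtr0_norm h); lra.
set s := \sum_i p i.
have sq : \sum_i q i = s.
  have : \sum_i (p i - q i) = 0 by apply: etrans v0; apply: eq_bigr => i _; rewrite vpq.
  by rewrite sumrB => /eqP; rewrite subr_eq0 => /eqP h; rewrite /s h.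
have nv : norm1 v = s + s.
  by rewrite /norm1 -{2}sq -big_split /=; apply: eq_bigr => i _; rewrite avpq.
have s0 : 0 <= s by apply: sumr_ge0.
have key j : s * (v *m A) 0 j = \sum_i \sum_k p i * q k * (A i j - A k j).
  set T := \sum_k q k * A k j.
  have E1 i : \sum_k p i * q k * (A i j - A k j) = p i * A i j * s - p i * T.
    rewrite /T -sq !mulr_sumr -sumrB; apply: eq_bigr => k _; ring.
  rewrite (eq_bigr _ (fun i _ => E1 i)) sumrB -!mulr_suml mxE.
  under eq_bigr do rewrite vpq mulrBl.
  rewrite sumrB -/s -/T; ring.
have key2 : s * norm1 (v *m A) <= (s + s) * (1 - dobrushin A) * s.
  apply: le_trans (_ : \sum_j \sum_i \sum_k p i * q k * `|A i j - A k j| <= _).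
    rewrite /norm1 mulr_sumr; apply: ler_sum => j _.
    rewrite -(ger0_norm s0) -normrM key.
    apply: le_trans (ler_norm_sum _ _ _) _; apply: ler_sum => i _.
    apply: le_trans (ler_norm_sum _ _ _) _; apply: ler_sum => k _.
    by rewrite normrM ger0_norm // mulr_ge0.
  rewrite exchange_big /=.
  apply: le_trans (_ : \sum_i \sum_k p i * q k * (2 * (1 - dobrushin A)) <= _).
    apply: ler_sum => i _; rewrite exchange_big /=; apply: ler_sum => k _.
    rewrite -mulr_sumr; apply: ler_wpM2l; first exact: mulr_ge0.
    under eq_bigr do rewrite absmin.
    rewrite sumrB big_split /= !a1 -mulr_sumr.
    have := @dob_le _ _ A i k; lra.
  rewrite (_ : (s + s) * (1 - dobrushin A) * s = s * s * (2 * (1 - dobrushin A))); last ring.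
  rewrite le_eqVlt; apply/orP; left; apply/eqP.
  under eq_bigr do rewrite -mulr_suml -mulr_sumr sq.
  by rewrite -!mulr_suml.
have [sz|sp] := eqVneq s 0.
  have vz : v = 0.
    apply/rowP => i; rewrite mxE.
    rewrite vpq (psumr_eq0P (fun i _ => p0 i) sz) // (psumr_eq0P (fun i _ => q0 i) (etrans sq sz)) //.
    by rewrite subrr.
  by rewrite vz mul0mx /norm1 big1 ?mulr0 // => j _; rewrite mxE normr0.
have spos : 0 < s by rewrite lt_def sp s0.
rewrite nv -(ler_pM2l spos).
by apply: le_trans key2 _; rewrite le_eqVlt; apply/orP; left; apply/eqP; ring.
Qed.

Lemma geom (R : archiRealFieldType) (sg d : R) : 0 < sg -> sg <= 1 -> 0 < d ->
  exists N : nat, forall k, (N <= k)%N -> (1 - sg) ^+ k * 2 <= d.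
Proof.
move=> s0 s1 d0.
have bern N : 1 + N%:R * sg <= (1 + sg) ^+ N.
  elim: N => [|N IH]; first by rewrite expr0 mul0r addr0.
  rewrite exprS -natr1.
  have : 0 <= N%:R * sg by apply: mulr_ge0 => //; exact: ltW.
  nra.
have prod N : (1 - sg) ^+ N * (1 + N%:R * sg) <= 1.
  apply: le_trans (_ : (1 - sg) ^+ N * (1 + sg) ^+ N <= 1).
    by apply: ler_wpM2l; [apply: exprn_ge0; lra | exact: bern].
  rewrite -exprMn; apply: exprn_ile1; nra.
set x := 2 / (sg * d).
have x0 : 0 <= x by rewrite /x; apply: divr_ge0 => //; apply: mulr_ge0; lra.
exists (Num.Def.archi_bound x) => k hk.
have hN := archi_boundP x0.
have hk' : (1 - sg) ^+ k <= (1 - sg) ^+ (Num.Def.archi_bound x).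
  by apply: ler_wiXn2l => //; lra.
have r0 : 0 <= (1 - sg) ^+ (Num.Def.archi_bound x) by apply: exprn_ge0; lra.
set r := (1 - sg) ^+ Num.Def.archi_bound x in hk' r0.
set M := (Num.Def.archi_bound x)%:R in hN.
have hp := prod (Num.Def.archi_bound x); rewrite -/r -/M in hp.
have : 2 < M * sg * d.
  have e : x * (sg * d) = 2 by rewrite /x mulfVK // mulf_neq0 // ?lt0r_neq0 //.
  have sd : 0 < sg * d by exact: mulr_gt0.
  nra.
move=> h2.
have h1 : r * (M * sg) <= 1 by nra.
have h4 : r * (M * sg) * d <= d by have := ler_wpM2r (ltW d0) h1; rewrite mul1r.
have h3 : r * 2 <= r * (M * sg * d) by nra.
have h5 : r * (M * sg * d) = r * (M * sg) * d by ring.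
lra.
Qed.

Theorem lemma4 (R : archiRealFieldType) (n : nat) (A : 'M[R]_n)
  (As : nat -> 'M[R]_n) (mustar : 'rV[R]_n) (eps : R) :
  stochastic A ->
  0 < dobrushin A ->
  (forall k, stochastic (As k)) ->
  prob_vec mustar -> mustar = mustar *m A ->
  0 < eps -> eps < 1 ->
  (forall k i j, `|As k i j - A i j| <= dobrushin A * eps / (2 * n%:R)) ->
  forall mu0 : 'rV[R]_n, prob_vec mu0 ->
  (* limsup_{k -> oo} ||mu0 A_0 ... A_k - mustar||_1 <= eps *)
  forall delta : R, 0 < delta ->
    exists N : nat, forall k : nat, (N <= k)%N ->
      norm1 (traj mu0 As k - mustar) <= eps + delta.
Proof.
move=> hA hs hAs hms hfix e0 e1 hc mu0 hmu0 d d0.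
have s1 := @dob_le1 _ _ A.
set sg := dobrushin A in hs hc s1 *.
have tp k : prob_vec (traj mu0 As k).
  elim: k => [|k IH] /=; exact: prob_mul.
have hn : n%:R * (sg * eps / (2 * n%:R)) <= sg * eps / 2.
  have [n0|npos] := eqVneq n 0%N.
    rewrite n0 mul0r; apply: divr_ge0; last lra.
    by apply: mulr_ge0; apply: ltW.
  rewrite le_eqVlt; apply/orP; left; apply/eqP; field.
  by rewrite pnatr_eq0.
have rec k : norm1 (traj mu0 As k.+1 - mustar) <=
    (1 - sg) * norm1 (traj mu0 As k - mustar) + sg * eps / 2.
  have E : traj mu0 As k.+1 - mustar =
      (traj mu0 As k - mustar) *m A + traj mu0 As k *m (As k.+1 - A).
    rewrite /= mulmxBl mulmxBr -hfix.
    by rewrite [RHS]addrC addrA subrK.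
  rewrite E; apply: le_trans (norm1_add _ _ _ _) _; apply: lerD.
    apply: contract => //.
    have [t0 t1] := tp k; have [m0 m1] := hms.
    under eq_bigr do rewrite !mxE.
    by rewrite sumrB t1 m1 subrr.
  apply: le_trans hn.
  apply: perturb => // i j; rewrite !mxE; exact: hc.
have bound k : norm1 (traj mu0 As k - mustar) <= (1 - sg) ^+ k * 2 + eps / 2.
  elim: k => [|k IH].
    rewrite expr0 mul1r; have := norm1_diff _ _ _ _ (tp 0%N) hms; lra.
  apply: le_trans (rec k) _.
  have : (1 - sg) * norm1 (traj mu0 As k - mustar) <= (1 - sg) * ((1 - sg) ^+ k * 2 + eps / 2).
    by apply: ler_wpM2l => //; lra.
  rewrite exprS; lra.
have [N HN] := geom _ _ _ hs s1 d0.
exists N => k hk.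
have := bound k; have := HN k hk; lra.
Qed.
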